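(* Let $2<\alpha<4$ and $c\ge 1$. For $N_1>0$ set $N_2=cN_1$, and let $(\Lambda_1^*,\Lambda_2^* )$ be the Nash equilibrium of the two-player Random Access Game in which player $i\in\{1,2\}$ chooses $\Lambda_i\in[0,N_i]$ and receives payoff \[ U_i(\Lambda_1,\Lambda_2)=\sup_{\beta>0}\ \Lambda_i\log(1+\beta)\,e^{-(\Lambda_1+\Lambda_2)\beta^{2/\alpha}} . \] Then, in the limit $N_1\to\infty$, the equilibrium is \[ (\Lambda_1^*,\Lambda_2^* )=\begin{cases}(N_1,N_2), & N_1\le N_2\le \frac{2}{\alpha-2}N_1,\\[2pt] \left(N_1,\frac{2}{\alpha-2}N_1\right), & \frac{2}{\alpha-2}N_1\le N_2,\end{cases} \] in the sense that $\Lambda_1^*=N_1$ and $\Lambda_2^*/N_1\to\min\!\left(c,\frac{2}{\alpha-2}\right)$ as $N_1\to\infty$.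
   Context: A Nash equilibrium is a pair $(\Lambda_1^*,\Lambda_2^* )\in[0,N_1]\times[0,N_2]$ such that $\Lambda_1^*$ maximizes $U_1(\cdot,\Lambda_2^* )$ over $[0,N_1]$ and $\Lambda_2^*$ maximizes $U_2(\Lambda_1^*,\cdot)$ over $[0,N_2]$. Here $\log$ is the natural logarithm. *)

(* Defs.v *)
From HB Require Import structures.
From mathcomp Require Import all_boot all_order all_algebra.
From mathcomp Require Import all_classical all_reals all_analysis.
Set Implicit Arguments. Unset Strict Implicit. Unset Printing Implicit Defensive.
Import Order.TTheory GRing.Theory Num.Theory.
Import numFieldNormedType.Exports.
Local Open Scope classical_set_scope.
Local Open Scope ring_scope.

Definition rag_payoff (R : realType) (alpha L1 L2 Li : R) : R :=
  sup [set Li * ln (1 + b) * expR (- (L1 + L2) * b `^ (2 / alpha))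
       | b in [set b : R | 0 < b]].

Definition U1 (R : realType) (alpha L1 L2 : R) : R := rag_payoff alpha L1 L2 L1.
Definition U2 (R : realType) (alpha L1 L2 : R) : R := rag_payoff alpha L1 L2 L2.

Definition is_nash (R : realType) (alpha N1 N2 L1 L2 : R) : Prop :=
  [/\ 0 <= L1 <= N1, 0 <= L2 <= N2,
      (forall x, 0 <= x <= N1 -> U1 alpha x L2 <= U1 alpha L1 L2) &
      (forall y, 0 <= y <= N2 -> U2 alpha L1 y <= U2 alpha L1 L2)].

(* Main.v *)
Require Import Defs.
From HB Require Import structures.
From mathcomp Require Import all_boot all_order all_algebra.
From mathcomp Require Import all_classical all_reals all_analysis.
From mathcomp Require Import ring lra.
Import Order.TTheory GRing.Theory Num.Theory.
Import numFieldNormedType.Exports.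
Local Open Scope classical_set_scope.
Local Open Scope ring_scope.
Set Implicit Arguments. Unset Strict Implicit. Unset Printing Implicit Defensive.
Definition TT (R : realType) (alpha S b : R) : R :=
  ln (1 + b) * expR (- S * b `^ (2 / alpha)).
Definition FF (R : realType) (alpha S : R) : R :=
  sup [set TT alpha S b | b in [set b : R | 0 < b]].
Definition bb1 (R : realType) (alpha S : R) : R := (alpha / 2 / S) `^ (alpha / 2).

Lemma TT_gt0 (R : realType) (alpha S b : R) : 0 < b -> 0 < TT alpha S b.
Proof.
move=> b0; rewrite /TT mulr_gt0 ?expR_gt0 // ln_gt0 //; lra.
Qed.

Lemma TT_shift (R : realType) (alpha S h b : R) :
  TT alpha S b = TT alpha (S + h) b * expR (h * b `^ (2 / alpha)).
Proof.
rewrite /TT -mulrA -expRD; congr (_ * expR _); ring.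
Qed.

Lemma bb1_pow (R : realType) (alpha S : R) : 0 < alpha -> 0 < S ->
  bb1 alpha S `^ (2 / alpha) = alpha / 2 / S.
Proof.
move=> a0 S0; rewrite /bb1 -powRrM.
have -> : alpha / 2 * (2 / alpha) = 1 by field; apply: lt0r_neq0.
apply: powRr1; rewrite divr_ge0 // ?ltW //; lra.
Qed.

Lemma pow_inv (R : realType) (alpha x : R) : 0 < alpha -> 0 <= x ->
  (x `^ (2 / alpha)) `^ (alpha / 2) = x.
Proof.
move=> a0 x0; rewrite -powRrM.
have -> : 2 / alpha * (alpha / 2) = 1 by field; apply: lt0r_neq0.
exact: powRr1.
Qed.

Lemma bb1_gt0 (R : realType) (alpha S : R) : 0 < alpha -> 0 < S -> 0 < bb1 alpha S.
Proof. move=> a0 S0; rewrite /bb1 powR_gt0 // divr_gt0 //; lra. Qed.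

Lemma ln_scale (R : realType) (r b : R) : 1 <= r -> 0 <= b ->
  ln (1 + r * b) <= r * ln (1 + b).
Proof.
move=> r1 b0.
have r0 : 0 < r by lra.
have t0 : 0 <= r^-1 by rewrite invr_ge0 ltW.
have t1 : r^-1 <= 1 by rewrite invf_le1.
have := @concave_ln R (Itv01 t0 t1) (1 + r * b) 1.
rewrite !convRE /= ln1 mulr0 addr0 => /(_ _ _).
have h1 : 0 < 1 + r * b by have := mulr_ge0 (ltW r0) b0; lra.
move=> /(_ h1 ltr01).
have -> : r^-1 * (1 + r * b) + (1 - r^-1) * 1 = 1 + b by field; apply: lt0r_neq0.
move=> H; rewrite -ler_pdivrMl // mulrC; done.
Qed.

Lemma ln_le_sub1 (R : realType) (x : R) : 0 < x -> ln x <= x - 1.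
Proof. move=> x0; have := @le_ln1Dx R (x - 1); rewrite addrCA subrr addr0; apply; lra. Qed.

Lemma TT_decr (R : realType) (alpha S b : R) : 2 < alpha -> 0 < S ->
  bb1 alpha S <= b -> TT alpha S b <= TT alpha S (bb1 alpha S).
Proof.
move=> a2 S0 hb.
have a0 : 0 < alpha by lra.
set b1 := bb1 alpha S.
have b10 : 0 < b1 by exact: bb1_gt0.
set r := b / b1.
have r1 : 1 <= r by rewrite /r ler_pdivlMr // mul1r.
have r0 : 0 < r by lra.
have hbr : b = r * b1 by rewrite /r divfK // lt0r_neq0.
have hln : ln (1 + b) <= r * ln (1 + b1) by rewrite hbr; apply: ln_scale; lra.
have lnb1 : 0 <= ln (1 + b1) by apply: ln_ge0; lra.
have hpow : S * b `^ (2/alpha) = alpha / 2 * r `^ (2 / alpha).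
  rewrite hbr powRM; [|lra|lra]. rewrite bb1_pow //; field; apply: lt0r_neq0 => //.
have hS1 : - S * b1 `^ (2 / alpha) = - (alpha / 2).
  rewrite bb1_pow //; field; apply: lt0r_neq0 => //.
have key : r * expR (- S * b `^ (2 / alpha)) <= expR (- (alpha / 2)).
  rewrite mulNr hpow.
  have rd0 : 0 < r `^ (2 / alpha) by apply: powR_gt0.
  have hl : ln r = alpha / 2 * ln (r `^ (2 / alpha)).
    rewrite ln_powR; field; apply: lt0r_neq0 => //.
  have : ln r <= alpha / 2 * r `^ (2 / alpha) - alpha / 2.
    rewrite hl; have := ln_le_sub1 rd0.
    have : 0 < alpha / 2 by lra.
    move=> h2 h3; have := ler_wpM2l (ltW h2) h3; lra.
  rewrite -ler_expR lnK ?posrE // => h.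
  have := ler_wpM2r (ltW (expR_gt0 (- (alpha / 2 * r `^ (2 / alpha))))) h.
  by rewrite -expRD; congr (_ <= expR _); ring.
rewrite /TT hS1.
apply: (le_trans (ler_wpM2r (ltW (expR_gt0 _)) hln)).
have := ler_wpM2l lnb1 key; lra.
Qed.


Lemma TT_le_ln (R : realType) (alpha S b : R) : 0 <= S -> 0 < b ->
  TT alpha S b <= b.
Proof.
move=> S0 b0; rewrite /TT.
have l0 : 0 <= ln (1 + b) by apply: ln_ge0; lra.
have l1 : ln (1 + b) <= b by apply: le_ln1Dx; lra.
have e1 : expR (- S * b `^ (2 / alpha)) <= 1.
  rewrite expR_le1 mulNr oppr_le0; apply: mulr_ge0 => //; exact: powR_ge0.
have := ler_wpM2l l0 e1; lra.
Qed.

Lemma TT_le_bb1 (R : realType) (alpha S b : R) : 2 < alpha -> 0 < S -> 0 < b ->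
  TT alpha S b <= bb1 alpha S.
Proof.
move=> a2 S0 b0.
have a0 : 0 < alpha by lra.
have b10 := bb1_gt0 a0 S0.
case: (leP (bb1 alpha S) b) => hb.
  apply: le_trans (TT_decr a2 S0 hb) _; apply: TT_le_ln => //; lra.
apply: le_trans (TT_le_ln _ _ _) _; [lra|done|lra].
Qed.

Definition EE (R : realType) (alpha S : R) := [set TT alpha S b | b in [set b : R | 0 < b]].

Lemma EE_ub (R : realType) (alpha S : R) : 2 < alpha -> 0 < S -> has_ubound (EE alpha S).
Proof.
move=> a2 S0; exists (bb1 alpha S) => y [b b0 <-]; exact: TT_le_bb1.
Qed.

Lemma EE_n0 (R : realType) (alpha S : R) : EE alpha S !=set0.
Proof. by exists (TT alpha S 1); exists 1 => //=; rewrite ltr01. Qed.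

Lemma FF_ge (R : realType) (alpha S b : R) : 2 < alpha -> 0 < S -> 0 < b ->
  TT alpha S b <= FF alpha S.
Proof.
move=> a2 S0 b0; apply: (ub_le_sup (EE_ub a2 S0)); by exists b.
Qed.

Lemma FF_le (R : realType) (alpha S M : R) :
  (forall b, 0 < b -> TT alpha S b <= M) -> FF alpha S <= M.
Proof.
move=> H; apply: ge_sup; first exact: EE_n0.
by move=> y [b b0 <-]; apply: H.
Qed.

Lemma FF_gt0 (R : realType) (alpha S : R) : 2 < alpha -> 0 < S -> 0 < FF alpha S.
Proof.
move=> a2 S0; apply: lt_le_trans (TT_gt0 alpha S ltr01) (FF_ge a2 S0 ltr01).
Qed.

Lemma payoff_eq (R : realType) (alpha S x : R) : 2 < alpha -> 0 < S -> 0 <= x ->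
  sup [set x * ln (1 + b) * expR (- S * b `^ (2 / alpha)) | b in [set b : R | 0 < b]]
  = x * FF alpha S.
Proof.
move=> a2 S0 x0.
set E := [set _ | b in _].
have eE : forall b, 0 < b -> E (x * TT alpha S b).
  by move=> b b0; exists b => //; rewrite /TT mulrA.
have En : E !=set0 by exists (x * TT alpha S 1); apply: eE; exact: ltr01.
have Eub : ubound E (x * FF alpha S).
  move=> y [b b0 <-]; rewrite -mulrA; apply: ler_wpM2l => //.
  exact: FF_ge.
have Ehub : has_ubound E by exists (x * FF alpha S).
apply/eqP; rewrite eq_le; apply/andP; split; first exact: ge_sup.
case: (eqVneq x 0) => [xz|xn0].
  have := ub_le_sup Ehub (eE 1 ltr01); rewrite xz !mul0r //.
have xp : 0 < x by rewrite lt0r xn0.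
rewrite leNgt; apply/negP => H.
have H1 : sup E / x < FF alpha S by rewrite ltr_pdivrMr // mulrC.
have [y [b b0 <-] hy] := sup_gt (EE_n0 alpha S) H1.
have := ub_le_sup Ehub (eE b b0).
move: hy; rewrite ltr_pdivrMr // => hy; lra.
Qed.


Lemma TT_ge0 (R : realType) (alpha S b : R) : 0 < b -> 0 <= TT alpha S b.
Proof. by move=> b0; apply: ltW; apply: TT_gt0. Qed.

Lemma powd_le (R : realType) (alpha x y : R) : 0 < alpha -> 0 <= x -> x <= y ->
  x `^ (2 / alpha) <= y `^ (2 / alpha).
Proof.
move=> a0 x0 xy; apply: ge0_ler_powR => //; rewrite ?nnegrE //.
  by rewrite divr_ge0 // ltW.
exact: le_trans xy.
Qed.

Lemma FF_shift_up (R : realType) (alpha S h : R) : 2 < alpha -> 0 < S -> 0 <= h ->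
  FF alpha S <= FF alpha (S + h) * expR (h * (alpha / 2 / S)).
Proof.
move=> a2 S0 h0.
have a0 : 0 < alpha by lra.
have Sh0 : 0 < S + h by lra.
have b10 := bb1_gt0 a0 S0.
have key : forall b, 0 < b -> b `^ (2 / alpha) <= alpha / 2 / S ->
    TT alpha S b <= FF alpha (S + h) * expR (h * (alpha / 2 / S)).
  move=> b b0 hb; rewrite (TT_shift alpha S h b).
  apply: ler_pM; [exact: TT_ge0|exact: expR_ge0|exact: FF_ge|].
  rewrite ler_expR; exact: ler_wpM2l.
apply: FF_le => b b0.
case: (leP b (bb1 alpha S)) => hb.
  apply: key => //; rewrite -(bb1_pow a0 S0); apply: powd_le => //; lra.
apply: le_trans (TT_decr a2 S0 (ltW hb)) _.
by apply: key => //; rewrite bb1_pow.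
Qed.


Lemma lnsub (R : realType) (s s1 : R) : 0 < s -> s <= s1 -> s1 <= 1 ->
  ln s - s <= ln s1 - s1.
Proof.
move=> s0 ss1 s11.
have s10 : 0 < s1 by lra.
have q0 : 0 < s / s1 by rewrite divr_gt0.
have := ln_le_sub1 q0; rewrite ln_div ?posrE // => h.
have : s / s1 - 1 <= s - s1.
  have -> : s / s1 - 1 = (s - s1) / s1 by field; apply: lt0r_neq0.
  rewrite ler_pdivrMr //; nra.
lra.
Qed.

Lemma ln_lower (R : realType) (x : R) : 0 < x -> x / (1 + x) <= ln (1 + x).
Proof.
move=> x0.
have q0 : 0 < (1 + x)^-1 by rewrite invr_gt0; lra.
have := ln_le_sub1 q0; rewrite lnV ?posrE; last lra.
have -> : (1 + x)^-1 - 1 = - (x / (1 + x)) by field; apply: lt0r_neq0; lra.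
lra.
Qed.

Lemma m_pos (R : realType) (s1 : R) : 0 < s1 -> s1 < 1 -> ln s1 + 1 - s1 < 0.
Proof.
move=> s0 s1l.
have hn : ln s1 != 0.
  by rewrite ln_eq0 // lt_eqF.
have := expR_gt1Dx hn; rewrite lnK ?posrE //; lra.
Qed.


Lemma FF_shift_down (R : realType) (alpha th : R) : 2 < alpha -> 1 < th -> th < alpha / 2 ->
  exists S0 eta, 0 < eta /\ forall S h, S0 <= S -> 0 <= h -> h <= eta * S -> h < S ->
   FF alpha S <= FF alpha (S - h) * expR (- (h * (th / S))).
Proof.
move=> a2 th1 thp.
have a0 : 0 < alpha by lra.
pose p := alpha / 2.
have p1 : 1 < p by rewrite /p; lra.
have thp' : th < p by [].
have p0 : 0 < p by lra.
pose s1 := th / p.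
have s10 : 0 < s1 by rewrite /s1 divr_gt0 //; lra.
have s11 : s1 < 1 by rewrite /s1 ltr_pdivrMr // mul1r.
pose m := - (ln s1 + 1 - s1).
have m0 : 0 < m by have := m_pos s10 s11; rewrite /m; lra.
exists (p + 2 / m), (p * m / (2 * th)); split.
  by rewrite divr_gt0 //; [rewrite mulr_gt0 //; lra | lra].
move=> S h hS h0 hhS hhS'.
have p0' : 0 <= p by lra.
have mS : 2 / m <= S by lra.
have m2 : 0 < 2 / m by rewrite divr_gt0.
have S0 : 0 < S by lra.
have Sh0 : 0 < S - h by lra.
have b10 := bb1_gt0 a0 S0.
have b1d := bb1_pow a0 S0.
have d0 : 0 < 2 / alpha by rewrite divr_gt0.
apply: FF_le => b b0.
have bd0 : 0 < b `^ (2 / alpha) by apply: powR_gt0.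
case: (leP (th / S) (b `^ (2 / alpha))) => hb.
  rewrite (TT_shift alpha S (- h) b).
  apply: ler_pM; [exact: TT_ge0|exact: expR_ge0|exact: FF_ge|].
  rewrite ler_expR mulNr lerN2; exact: ler_wpM2l.
pose u := S * b `^ (2 / alpha).
pose s := u / p.
have u0 : 0 < u by rewrite /u mulr_gt0.
have s0 : 0 < s by rewrite /s divr_gt0.
have ut : u < th by rewrite /u mulrC -ltr_pdivlMr.
have ss1 : s <= s1 by rewrite /s /s1 ler_pM2r ?invr_gt0 //; lra.
have hbd : b `^ (2 / alpha) = p / S * s.
  by rewrite /s /u /p; field; apply/andP; split; apply: lt0r_neq0.
have hb1 : b = bb1 alpha S * s `^ p.
  rewrite -{1}(pow_inv a0 (ltW b0)) hbd powRM //; last exact: ltW.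
  by rewrite divr_ge0 //; lra.
have hsp : s `^ p = expR (p * ln s).
  by rewrite -ln_powR lnK // posrE powR_gt0.
have lnb1 := ln_lower b10.
have TS1 : TT alpha S (bb1 alpha S) = ln (1 + bb1 alpha S) * expR (- p).
  rewrite /TT mulNr b1d; congr (_ * expR (- _)); rewrite /p; field.
  by apply: lt0r_neq0.
have T1 : TT alpha S (bb1 alpha S) <= TT alpha (S - h) (bb1 alpha S).
  rewrite (TT_shift alpha (S - h) h (bb1 alpha S)) subrK.
  rewrite -[X in X <= _]mulr1; apply: ler_wpM2l; first exact: TT_ge0.
  rewrite -expR0 ler_expR; apply: mulr_ge0 => //; exact: powR_ge0.
have F1 := FF_ge a2 Sh0 b10.
have RHS : bb1 alpha S / (1 + bb1 alpha S) * expR (- p) * expR (- (h * (th / S)))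
    <= FF alpha (S - h) * expR (- (h * (th / S))).
  apply: ler_wpM2r; first exact: expR_ge0.
  apply: le_trans F1; apply: le_trans T1; rewrite TS1.
  by apply: ler_wpM2r; [exact: expR_ge0|].
apply: le_trans RHS.
have LHS : TT alpha S b <= b * expR (- u).
  rewrite /TT /u mulNr; apply: ler_wpM2r; first exact: expR_ge0.
  by apply: le_ln1Dx; lra.
apply: le_trans LHS _.
have hth : h * (th / S) <= p * m / 2.
  have : h * (th / S) <= p * m / (2 * th) * S * (th / S).
    apply: ler_wpM2r => //; by rewrite divr_ge0 //; lra.
  have -> : p * m / (2 * th) * S * (th / S) = p * m / 2.
    by field; apply/andP; split; apply: lt0r_neq0 => //; lra.
  done.
have hb1le : bb1 alpha S <= p * m / 2.
  have pS1 : 0 < p / S <= 1.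
    apply/andP; split; first by rewrite divr_gt0 //; lra.
    rewrite ler_pdivrMr //; lra.
  have := ge1r_powR pS1 (ltW p1); rewrite -/(bb1 alpha S) => h1.
  apply: le_trans h1 _.
  rewrite ler_pdivrMr //.
  have : 2 / m * m = 2 by rewrite divfK // lt0r_neq0.
  have : 2 / m * m <= S * m by apply: ler_wpM2r => //; exact: ltW.
  move=> h2 h3.
  have : p * 2 <= p * (S * m) by apply: ler_wpM2l; lra.
  lra.
have hlns := lnsub s0 ss1 (ltW s11).
have hpl : p * (ln s - s) <= p * (ln s1 - s1) by apply: ler_wpM2l; lra.
have hu : u = p * s by rewrite /s; field; apply: lt0r_neq0; lra.
have key : p * ln s - u + bb1 alpha S <= - p - h * (th / S).
  have hpm : p * m = - p * ln s1 + p * s1 - p by rewrite /m; ring.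
  rewrite hu; lra.
rewrite hb1 hsp.
have e1 : 1 + bb1 alpha S <= expR (bb1 alpha S) by exact: expR_ge1Dx.
have p1b : 0 < 1 + bb1 alpha S by lra.
have H : expR (p * ln s) * expR (- u) * (1 + bb1 alpha S) <=
    expR (- p) * expR (- (h * (th / S))).
  apply: le_trans (ler_wpM2l _ e1) _.
    by apply: mulr_ge0; exact: expR_ge0.
  rewrite -!expRD ler_expR; lra.
have -> : bb1 alpha S * expR (p * ln s) * expR (- u) =
    bb1 alpha S / (1 + bb1 alpha S) * (expR (p * ln s) * expR (- u) * (1 + bb1 alpha S)).
  by field; apply: lt0r_neq0.
have z0 : 0 <= bb1 alpha S / (1 + bb1 alpha S) by rewrite divr_ge0 // ltW.
by have := ler_wpM2l z0 H; rewrite !mulrA.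
Qed.



Lemma U1_eq (R : realType) (alpha x L : R) : 2 < alpha -> 0 <= x -> 0 < x + L ->
  U1 alpha x L = x * FF alpha (x + L).
Proof. by move=> a2 x0 S0; rewrite /U1 /rag_payoff payoff_eq. Qed.

Lemma U2_eq (R : realType) (alpha L y : R) : 2 < alpha -> 0 <= y -> 0 < L + y ->
  U2 alpha L y = y * FF alpha (L + y).
Proof. by move=> a2 x0 S0; rewrite /U2 /rag_payoff payoff_eq. Qed.

Lemma U1_zero (R : realType) (alpha L : R) : U1 alpha 0 L <= 0.
Proof.
rewrite /U1 /rag_payoff; apply: ge_sup.
  by exists (0 * ln (1 + 1) * expR (- (0 + L) * 1 `^ (2 / alpha))); exists 1 => //=; rewrite ltr01.
by move=> y [b _ <-]; rewrite !mul0r.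
Qed.

Lemma U2_zero (R : realType) (alpha L : R) : U2 alpha L 0 <= 0.
Proof.
rewrite /U2 /rag_payoff; apply: ge_sup.
  by exists (0 * ln (1 + 1) * expR (- (L + 0) * 1 `^ (2 / alpha))); exists 1 => //=; rewrite ltr01.
by move=> y [b _ <-]; rewrite !mul0r.
Qed.

Lemma pick3 (R : realType) (a b c : R) : 0 < a -> 0 < b -> 0 < c ->
  exists h : R, [/\ 0 < h, h < a, h < b & h < c].
Proof.
move=> a0 b0 c0.
case: (leP a b) => ab; case: (leP a c) => ac; case: (leP b c) => bc.
all: first [ exists (a / 2); split; lra | exists (b / 2); split; lra | exists (c / 2); split; lra ].
Qed.

Lemma improve_up (R : realType) (alpha x L M : R) : 2 < alpha -> 0 < x -> 0 <= L ->
  x < M -> alpha / 2 * x < x + L ->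
  exists x', [/\ 0 <= x', x' <= M & x * FF alpha (x + L) < x' * FF alpha (x' + L)].
Proof.
move=> a2 x0 L0 xM hp.
pose p := alpha / 2.
have p0 : 0 < p by rewrite /p; lra.
pose S := x + L.
have S0 : 0 < S by rewrite /S; lra.
have b0 : 0 < S / p - x.
  by rewrite subr_gt0 ltr_pdivlMr // mulrC.
have a0 : 0 < M - x by lra.
have [h [h0 h1 h2 _]] := pick3 a0 b0 (@ltr01 R).
exists (x + h); split; [lra|lra|].
have eS : x + h + L = S + h by rewrite /S; ring.
rewrite eS.
have FS0 := FF_gt0 a2 S0.
have up := FF_shift_up a2 S0 (ltW h0).
set q := h * (alpha / 2 / S) in up *.
have eq1 : expR q * expR (- q) = 1 by rewrite -expRD subrr expR0.
have low : FF alpha S * expR (- q) <= FF alpha (S + h).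
  have := ler_wpM2r (ltW (expR_gt0 (- q))) up.
  by rewrite -mulrA eq1 mulr1.
have e1 : 1 - q <= expR (- q) by have := expR_ge1Dx (- q); lra.
have xq : (x + h) * q < h.
  have : (x + h) * p < S.
    have : x + h < S / p by lra.
    by rewrite ltr_pdivlMr.
  move=> hh.
  have -> : (x + h) * q = ((x + h) * p) * (h / S) by rewrite /q /p; field; apply: lt0r_neq0.
  have hS : 0 < h / S by rewrite divr_gt0.
  have H2 : (x + h) * p * (h / S) < S * (h / S) by rewrite ltr_pM2r.
  have e : S * (h / S) = h by field; apply: lt0r_neq0.
  lra.
have xh0 : 0 <= x + h by lra.
have step1 : (x + h) * (FF alpha S * (1 - q)) <= (x + h) * FF alpha (S + h).
  apply: ler_wpM2l => //; apply: le_trans low.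
  by apply: ler_wpM2l => //; exact: ltW.
apply: lt_le_trans step1.
have : x < (x + h) * (1 - q) by lra.
move=> hx; have : FF alpha S * x < FF alpha S * ((x + h) * (1 - q)) by rewrite ltr_pM2l.
lra.
Qed.

Lemma improve_down (R : realType) (alpha th S0 eta N y : R) : 2 < alpha -> 0 < eta ->
  (forall S h, S0 <= S -> 0 <= h -> h <= eta * S -> h < S ->
     FF alpha S <= FF alpha (S - h) * expR (- (h * (th / S)))) ->
  0 < N -> S0 <= N -> 0 < y -> 1 < th -> N + y < th * y ->
  exists y', [/\ 0 <= y', y' <= y & y * FF alpha (N + y) < y' * FF alpha (N + y')].
Proof.
move=> a2 eta0 Hd N0 NS0 y0 th1 hy.
pose S := N + y.
have S0p : 0 < S by rewrite /S; lra.
have c0 : 0 < (th * y - S) / th by rewrite divr_gt0 /S; lra.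
have eS0 : 0 < eta * S by rewrite mulr_gt0.
have [h [h0 h1 h2 h3]] := pick3 eS0 y0 c0.
exists (y - h); split; [lra|lra|].
have eS : N + (y - h) = S - h by rewrite /S; ring.
rewrite eS.
have FS0 := FF_gt0 a2 S0p.
have dn := Hd S h (le_trans NS0 (ler_wpDr (ltW y0) (lexx N))) (ltW h0) (ltW h1) ltac:(rewrite /S; lra).
set q := h * (th / S) in dn *.
have low : FF alpha S * expR q <= FF alpha (S - h).
  have := ler_wpM2r (ltW (expR_gt0 q)) dn.
  by rewrite -mulrA -expRD addNr expR0 mulr1.
have e1 : 1 + q <= expR q by exact: expR_ge1Dx.
have yq : h < (y - h) * q.
  have hh : S < (y - h) * th.
    have : h * th < th * y - S by rewrite -ltr_pdivlMr //; lra.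
    lra.
  have -> : (y - h) * q = ((y - h) * th) * (h / S) by rewrite /q; field; apply: lt0r_neq0.
  have hS : 0 < h / S by rewrite divr_gt0.
  have H2 : S * (h / S) < (y - h) * th * (h / S) by rewrite ltr_pM2r.
  have e : S * (h / S) = h by field; apply: lt0r_neq0.
  lra.
have yh0 : 0 <= y - h by lra.
have q0 : 0 <= q by rewrite /q mulr_ge0 // ?divr_ge0 //; lra.
have step1 : (y - h) * (FF alpha S * (1 + q)) <= (y - h) * FF alpha (S - h).
  apply: ler_wpM2l => //; apply: le_trans low.
  by apply: ler_wpM2l => //; exact: ltW.
apply: lt_le_trans step1.
have hx : y < (y - h) * (1 + q) by lra.
have : FF alpha S * y < FF alpha S * ((y - h) * (1 + q)) by rewrite ltr_pM2l.
lra.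
Qed.

Lemma nash_facts (R : realType) (alpha c N L1 L2 : R) : 2 < alpha -> alpha < 4 -> 1 <= c ->
  0 < N -> is_nash alpha N (c * N) L1 L2 ->
  [/\ L1 = N, 0 < L2, L2 <= c * N & (L2 = c * N \/ N + L2 <= alpha / 2 * L2)].
Proof.
move=> a2 a4 c1 N0 [/andP [L10 L1N] /andP [L20 L2N] H1 H2].
have cN : N <= c * N by rewrite ler_peMl // ltW.
have L1p : 0 < L1.
  rewrite lt_neqAle L10 andbT; apply/negP => /eqP E.
  have hN : 0 <= N <= N by rewrite lexx andbT ltW.
  have h := H1 N hN; rewrite -E in h.
  have e : U1 alpha N L2 = N * FF alpha (N + L2) by rewrite U1_eq // ?ltW //; lra.
  have hz := U1_zero alpha L2.
  have : 0 < N * FF alpha (N + L2) by rewrite mulr_gt0 // FF_gt0 //; lra.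
  lra.
have L2p : 0 < L2.
  rewrite lt_neqAle L20 andbT; apply/negP => /eqP E.
  have cN0 : 0 <= c * N by lra.
  have hN : 0 <= c * N <= c * N by rewrite lexx andbT cN0.
  have h := H2 (c * N) hN; rewrite -E in h.
  have e : U2 alpha L1 (c * N) = c * N * FF alpha (L1 + c * N) by rewrite U2_eq //; lra.
  have hz := U2_zero alpha L1.
  have : 0 < c * N * FF alpha (L1 + c * N) by rewrite mulr_gt0 // ?FF_gt0 //; lra.
  lra.
have P1 : L1 < N -> L1 + L2 <= alpha / 2 * L1.
  move=> hl; rewrite leNgt; apply/negP => hp.
  have [x' [x0 xN hx]] := improve_up a2 L1p (ltW L2p) hl hp.
  have hx' : 0 <= x' <= N by rewrite x0 xN.
  have h := H1 x' hx'.
  rewrite !U1_eq // in h; lra.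
have P2 : L2 < c * N -> L1 + L2 <= alpha / 2 * L2.
  move=> hl; rewrite leNgt; apply/negP => hp.
  have hp' : alpha / 2 * L2 < L2 + L1 by lra.
  have [x' [x0 xN hx]] := improve_up a2 L2p (ltW L1p) hl hp'.
  have hx' : 0 <= x' <= c * N by rewrite x0 xN.
  have h := H2 x' hx'.
  rewrite !U2_eq // in h; try lra.
  rewrite [L1 + x']addrC [L1 + L2]addrC in h; lra.
have L1E : L1 = N.
  apply/eqP; rewrite eq_le L1N /=; rewrite leNgt; apply/negP => hl.
  have h1 := P1 hl.
  have t : 0 < (2 - alpha / 2) * L1 by rewrite mulr_gt0 //; lra.
  have hl2 : L2 < c * N by lra.
  have h2 := P2 hl2.
  have t2 : 0 < (2 - alpha / 2) * L2 by rewrite mulr_gt0 //; lra.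
  lra.
split => //.
case: (ltP L2 (c * N)) => hl; last by left; lra.
by right; have := P2 hl; rewrite L1E.
Qed.



Unset Implicit Arguments. Set Strict Implicit.

Theorem theorem3 (R : realType) (alpha c : R) (Lam1 Lam2 : R -> R) :
  2 < alpha < 4 -> 1 <= c ->
  (forall N1 : R, 0 < N1 -> is_nash alpha N1 (c * N1) (Lam1 N1) (Lam2 N1)) ->
  (\forall N1 \near +oo, Lam1 N1 = N1) /\
  (Lam2 N1 / N1 @[N1 --> +oo] --> Num.min c (2 / (alpha - 2))).
Proof.
move=> /andP [a2 a4] c1 Hn.
have F N : 0 < N -> [/\ Lam1 N = N, 0 < Lam2 N, Lam2 N <= c * N &
     (Lam2 N = c * N \/ N + Lam2 N <= alpha / 2 * Lam2 N)].
  by move=> N0; apply: nash_facts => //; exact: Hn.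
split.
  near=> N.
  have N0 : 0 < N by near: N; apply: nbhs_pinfty_gt; rewrite num_real.
  by have [] := F N N0.
pose k := 2 / (alpha - 2).
have k0 : 0 < k by rewrite /k divr_gt0 //; lra.
have rat N : 0 < N -> [/\ Lam2 N / N <= c &
    (Lam2 N / N = c \/ k <= Lam2 N / N)].
  move=> N0; have [_ L2p L2c H] := F N N0.
  split; first by rewrite ler_pdivrMr.
  case: H => [->|H]; first by left; rewrite mulfK // lt0r_neq0.
  right; rewrite /k ler_pdivrMr ?subr_gt0 //.
  have -> : Lam2 N / N * (alpha - 2) = (Lam2 N * alpha - 2 * Lam2 N) / N.
    by field; apply: lt0r_neq0.
  rewrite ler_pdivlMr //; lra.
case: (leP c k) => ck.
  apply/cvgrPdist_le => e e0.
  near=> N.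
  have N0 : 0 < N by near: N; apply: nbhs_pinfty_gt; rewrite num_real.
  have [r1 r2] := rat N N0.
  have -> : Lam2 N / N = c by case: r2 => // r2; lra.
  by rewrite subrr normr0 ltW.
apply/cvgrPdist_le => e e0.
pose th := 1 + (k + e / 2)^-1.
have th1 : 1 < th by rewrite /th ltrDl invr_gt0; lra.
have thp : th < alpha / 2.
  have : (k + e / 2)^-1 < k^-1 by rewrite ltf_pV2 ?posrE //; lra.
  have -> : k^-1 = alpha / 2 - 1 by rewrite /k invf_div; field.
  rewrite /th; lra.
have [S0 [eta [eta0 Hd]]] := FF_shift_down a2 th1 thp.
near=> N.
have N0 : 0 < N by near: N; apply: nbhs_pinfty_gt; rewrite num_real.
have NS : S0 <= N by near: N; apply: nbhs_pinfty_ge; rewrite num_real.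
have [r1 r2] := rat N N0.
have [L1E L2p L2c H] := F N N0.
have up : th * Lam2 N <= N + Lam2 N.
  rewrite leNgt; apply/negP => hlt.
  have [y' [y0 yL hy]] := improve_down a2 eta0 Hd N0 NS L2p th1 hlt.
  have [_ _ _ H2] := Hn N N0.
  have hy' : 0 <= y' <= c * N by rewrite y0 /= (le_trans yL).
  have h := H2 y' hy'.
  rewrite L1E !U2_eq // in h; lra.
have rk : k <= Lam2 N / N by case: r2 => // ->; exact: ltW.
have ru : Lam2 N / N <= k + e / 2.
  have : (th - 1) * Lam2 N <= N by lra.
  have -> : th - 1 = (k + e / 2)^-1 by rewrite /th; ring.
  rewrite -ler_pdivlMl ?invr_gt0; last lra.
  rewrite invrK => h; rewrite ler_pdivrMr //; lra.
rewrite ler_norml; apply/andP; split; lra.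
Unshelve. all: end_near.
Qed.
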